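(* Let $f(\mathbf{x})=\mathbf{x}^{T}A\mathbf{x}+b^{T}\mathbf{x}+1$ with $A\in\mathbb{R}^{n\times n}$ symmetric and $b\in\mathbb{R}^n$, and suppose $f$ admits a monic Hermitian determinantal representation of size $2$ (equivalently, $Q/(1,1)=A-\frac14bb^T$ is negative semidefinite of rank at most $3$). Call two such representations $(A_1,\dots,A_n)$ and $(B_1,\dots,B_n)$ (Hermitian $2\times2$ matrices with $f(\mathbf{x})=\det(I_2+\sum_jx_jA_j)=\det(I_2+\sum_jx_jB_j)$) unitarily equivalent if there is a unitary $2\times 2$ matrix $U$ with $UA_jU^{*}=B_j$ for all $j$. Then: (i) if $\operatorname{rank}(Q/(1,1))=3$ (so $f$ has a Hermitian but no symmetric monic determinantal representation of size $2$), the monic Hermitian determinantal representations of size $2$ of $f$ form exactly two unitary equivalence classes; (ii) if $\operatorname{rank}(Q/(1,1))\le 2$, all monic Hermitian determinantal representations of size $2$ of $f$ are unitarily equivalent to one another. *)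

(* Defs.v *)
(* Complex numbers: an arbitrary numClosedFieldType C
   (e.g. the complex numbers); real numbers are its elements in Num.real. *)
From HB Require Import structures.
From mathcomp Require Import all_boot all_order all_algebra.
Set Implicit Arguments. Unset Strict Implicit. Unset Printing Implicit Defensive.
Import Order.TTheory GRing.Theory Num.Theory.
Local Open Scope ring_scope.

Definition adjmx (C : numClosedFieldType) m n (M : 'M[C]_(m, n)) : 'M[C]_(n, m) :=
  (map_mx (fun z => z^*) M)^T.

Definition hermitian (C : numClosedFieldType) (M : 'M[C]_2) : Prop := adjmx M = M.

Definition unitary (C : numClosedFieldType) (U : 'M[C]_2) : Prop := U *m adjmx U = 1%:M.

Definition real_mx (C : numClosedFieldType) m n (M : 'M[C]_(m, n)) : Prop :=
  forall i j, M i j \is Num.real.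

Definition quadf (C : numClosedFieldType) n (A : 'M[C]_n) (b : 'cV[C]_n)
  (x : 'cV[C]_n) : C :=
  (x^T *m A *m x) 0 0 + (b^T *m x) 0 0 + 1.

Definition mhdr2 (C : numClosedFieldType) n (A : 'M[C]_n) (b : 'cV[C]_n)
  (R : 'I_n -> 'M[C]_2) : Prop :=
  (forall j, hermitian (R j)) /\
  forall x : 'cV[C]_n, real_mx x ->
    quadf A b x = \det (1%:M + \sum_(j < n) x j 0 *: R j).

Definition unit_equiv (C : numClosedFieldType) n (R S : 'I_n -> 'M[C]_2) : Prop :=
  exists U : 'M[C]_2, unitary U /\ forall j, U *m R j *m adjmx U = S j.

(* Main.v *)
Require Import Defs.
From HB Require Import structures.
From mathcomp Require Import all_boot all_order all_algebra.
From mathcomp Require Import ring.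
Import Order.TTheory GRing.Theory Num.Theory.
Local Open Scope ring_scope.

Lemma ord2P (i : 'I_2) : i = 0 \/ i = 1.
Proof. case: i => [[|[|n]]] H; [left|right|by []]; exact: val_inj. Qed.

Lemma mx2P (C : numClosedFieldType) (M N : 'M[C]_2) :
  M 0 0 = N 0 0 -> M 0 1 = N 0 1 -> M 1 0 = N 1 0 -> M 1 1 = N 1 1 -> M = N.
Proof.
move=> h00 h01 h10 h11; apply/matrixP=> i j.
by case: (ord2P i) => ->; case: (ord2P j) => ->.
Qed.

Lemma o20 : (ord0 : 'I_2) = 0. Proof. exact: val_inj. Qed.
Lemma l21 : (lift ord0 ord0 : 'I_2) = 1. Proof. exact: val_inj. Qed.

Lemma mul2 (C : numClosedFieldType) (M N : 'M[C]_2) i j :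
  (M *m N) i j = M i 0 * N 0 j + M i 1 * N 1 j.
Proof. by rewrite mxE !big_ord_recl big_ord0 addr0 o20 l21. Qed.

Lemma tr2 (C : numClosedFieldType) (M : 'M[C]_2) : \tr M = M 0 0 + M 1 1.
Proof. by rewrite /mxtrace !big_ord_recl big_ord0 addr0 o20 l21. Qed.

Lemma det2 (C : numClosedFieldType) (M : 'M[C]_2) :
  \det M = M 0 0 * M 1 1 - M 0 1 * M 1 0.
Proof.
rewrite (expand_det_row _ 0) !big_ord_recl big_ord0 addr0 /cofactor !det_mx11 !mxE /=.
rewrite o20 l21.


have -> : (lift 1 0 : 'I_2) = 0 by apply: val_inj.
rewrite /bump /= expr0 expr1 !mul1r; ring.
Qed.

Lemma adjE (C : numClosedFieldType) (M : 'M[C]_2) i j : adjmx M i j = (M j i)^*.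
Proof. by rewrite /adjmx !mxE. Qed.

Lemma lc2 (C : numClosedFieldType) (c1 c2 k x y l1 r1 l2 r2 : C) : k != 0 ->
  k * (x - y) = c1 * (l1 - r1) + c2 * (l2 - r2) -> l1 = r1 -> l2 = r2 -> x = y.
Proof.
move=> hk h e1 e2; move: h; rewrite e1 e2 !subrr !mulr0 addr0 => /eqP.
by rewrite mulf_eq0 (negbTE hk) /= subr_eq0 => /eqP.
Qed.

Lemma lc3 (C : numClosedFieldType) (c1 c2 c3 k x y l1 r1 l2 r2 l3 r3 : C) : k != 0 ->
  k * (x - y) = c1 * (l1 - r1) + c2 * (l2 - r2) + c3 * (l3 - r3) ->
  l1 = r1 -> l2 = r2 -> l3 = r3 -> x = y.
Proof.
move=> hk h e1 e2 e3; move: h; rewrite e1 e2 e3 !subrr !mulr0 !addr0 => /eqP.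
by rewrite mulf_eq0 (negbTE hk) /= subr_eq0 => /eqP.
Qed.


Lemma lc1 (C : numClosedFieldType) (c1 k x y l1 r1 : C) : k != 0 ->
  k * (x - y) = c1 * (l1 - r1) -> l1 = r1 -> x = y.
Proof.
move=> hk h e1; move: h; rewrite e1 !subrr !mulr0 => /eqP.
by rewrite mulf_eq0 (negbTE hk) /= subr_eq0 => /eqP.
Qed.

Definition mk2 {C : numClosedFieldType} (a b c d : C) : 'M[C]_2 :=
  \matrix_(i, j) if i == 0 then (if j == 0 then a else b) else (if j == 0 then c else d).

Lemma mk2E (C : numClosedFieldType) (a b c d : C) :
  [/\ mk2 a b c d 0 0 = a, mk2 a b c d 0 1 = b, mk2 a b c d 1 0 = c & mk2 a b c d 1 1 = d].
Proof. by rewrite !mxE. Qed.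
Lemma mk00 (C : numClosedFieldType) (a b c d : C) : mk2 a b c d 0 0 = a. Proof. by rewrite !mxE. Qed.
Lemma mk01 (C : numClosedFieldType) (a b c d : C) : mk2 a b c d 0 1 = b. Proof. by rewrite !mxE. Qed.
Lemma mk10 (C : numClosedFieldType) (a b c d : C) : mk2 a b c d 1 0 = c. Proof. by rewrite !mxE. Qed.
Lemma mk11 (C : numClosedFieldType) (a b c d : C) : mk2 a b c d 1 1 = d. Proof. by rewrite !mxE. Qed.
Definition mkE := (mk00, mk01, mk10, mk11).

Lemma sumx (C : numClosedFieldType) n (F : 'I_n -> C) (u v : C) i j :
  \sum_k F k * (u * (k == i)%:R + v * (k == j)%:R) = u * F i + v * F j.
Proof.
rewrite (eq_bigr (fun k => u * (F k * (k == i)%:R) + v * (F k * (k == j)%:R))); last first.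
  by move=> k _; ring.
rewrite big_split /= -!mulr_sumr.
have sd : forall l, \sum_k F k * (k == l)%:R = F l.
  move=> l; rewrite (bigD1 l) //= eqxx mulr1 big1 ?addr0 // => k /negbTE ->.
  by rewrite mulr0.
by rewrite !sd.
Qed.

Definition xv {C : numClosedFieldType} {n} (u v : C) (i j : 'I_n) : 'cV[C]_n :=
  \col_k (u * (k == i)%:R + v * (k == j)%:R).

Lemma quad_ij (C : numClosedFieldType) n (A : 'M[C]_n) b u v i j :
  quadf A b (xv u v i j) =
  u * (u * A i i + v * A j i) + v * (u * A i j + v * A j j) + (u * b i 0 + v * b j 0) + 1.
Proof.
rewrite /quadf mxE.
rewrite (eq_bigr (fun l => (\sum_k (xv u v i j) k 0 * A k l) * (u * (l == i)%:R + v * (l == j)%:R))); last first.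
  by move=> l _; rewrite !mxE; congr (_ * _); apply: eq_bigr => k _; rewrite !mxE.
rewrite sumx.
rewrite (eq_bigr (fun k => A k i * (u * (k == i)%:R + v * (k == j)%:R))); last first.
  by move=> k _; rewrite !mxE mulrC.
rewrite sumx.
rewrite (eq_bigr (fun k => A k j * (u * (k == i)%:R + v * (k == j)%:R))); last first.
  by move=> k _; rewrite !mxE mulrC.
rewrite sumx mxE.
rewrite (eq_bigr (fun k => b k 0 * (u * (k == i)%:R + v * (k == j)%:R))); last first.
  by move=> k _; rewrite !mxE.
rewrite sumx; ring.
Qed.

Lemma sum_ij (C : numClosedFieldType) n (R : 'I_n -> 'M[C]_2) u v i j :
  \sum_(k < n) (xv u v i j) k 0 *: R k = u *: R i + v *: R j.
Proof.
apply/matrixP=> p q; rewrite summxE !mxE.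
rewrite (eq_bigr (fun k => R k p q * (u * (k == i)%:R + v * (k == j)%:R))); last first.
  by move=> k _; rewrite !mxE mulrC.
by rewrite sumx mulrC [v * _]mulrC.
Qed.

Lemma xv_real (C : numClosedFieldType) n (u v : C) i j :
  u \is Num.real -> v \is Num.real -> real_mx (xv u v i j : 'cV_n).
Proof. by move=> hu hv k l; rewrite mxE rpredD ?rpredM ?realn. Qed.

Lemma rep_facts (C : numClosedFieldType) n (A : 'M[C]_n) b R :
  A^T = A -> mhdr2 A b R ->
  (forall i, \tr (R i) = b i 0) /\
  (forall i j, \tr (R i *m R j) = b i 0 * b j 0 - 2 * A i j).
Proof.
move=> hA [hH hdet].
have E u v i j : u \is Num.real -> v \is Num.real ->
  u * (u * A i i + v * A j i) + v * (u * A i j + v * A j j) + (u * b i 0 + v * b j 0) + 1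
  = \det (1%:M + (u *: R i + v *: R j)).
  by move=> hu hv; rewrite -quad_ij -sum_ij; apply: hdet; apply: xv_real.
have hAji i j : A j i = A i j by rewrite -{1}hA mxE.
have two : (2 : C) != 0 by rewrite pnatr_eq0.
have htr i : \tr (R i) = b i 0.
  have E1 := E 1 0 i i (rpred1 _) (rpred0 _).
  have E2 := E (-1) 0 i i (_ : (-1 : C) \is Num.real) (rpred0 _).
  rewrite tr2; move: E1 E2; rewrite !det2 !mxE /= => E1 E2.
  by apply: (@lc2 C (-1) 1 2 _ _ _ _ _ _ two _ E1 (E2 _)); [ring | rewrite rpredN rpred1].
split=> // i j.
have E1 := E 1 1 i j (rpred1 _) (rpred1 _).
have E2 := E 1 0 i i (rpred1 _) (rpred0 _).
have E3 := E 1 0 j j (rpred1 _) (rpred0 _).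
move: E1 E2 E3; rewrite !det2 !mxE /= hAji => E1 E2 E3.
have t1 := htr i; have t2 := htr j; rewrite tr2 in t1; rewrite tr2 in t2.
rewrite -t1 -t2 in E1 E2 E3 *.
rewrite tr2 !mul2.
apply: (@lc3 C 1 (-1) (-1) 1 _ _ _ _ _ _ _ _ _ _ E1 E2 E3) => //; first by rewrite oner_eq0.
ring.
Qed.


Definition conjm {C : numClosedFieldType} (U : 'M[C]_2) : 'M[C]_2 := map_mx (fun z => z^*) U.
Definition conjt {C : numClosedFieldType} {n} (U : 'M[C]_2) (Y : 'I_n -> 'M[C]_2) :=
  fun j => U *m Y j *m adjmx U.
Definition tY {C : numClosedFieldType} {n} (Y : 'I_n -> 'M[C]_2) := fun j => (Y j)^T.

Lemma adjmxM (C : numClosedFieldType) (P Q : 'M[C]_2) : adjmx (P *m Q) = adjmx Q *m adjmx P.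
Proof. by apply: mx2P; rewrite !adjE !mul2 !adjE !rmorphD !rmorphM; ring. Qed.

Lemma adjmxK (C : numClosedFieldType) (P : 'M[C]_2) : adjmx (adjmx P) = P.
Proof. by apply: mx2P; rewrite !adjE conjCK. Qed.

Lemma adjmx1 (C : numClosedFieldType) : adjmx (1%:M : 'M[C]_2) = 1%:M.
Proof. by apply: mx2P; rewrite !adjE !mxE /= ?rmorph0 ?rmorph1. Qed.

Lemma unitaryC (C : numClosedFieldType) (U : 'M[C]_2) : unitary U -> adjmx U *m U = 1%:M.
Proof. exact: mulmx1C. Qed.

Lemma unitary_adj (C : numClosedFieldType) (U : 'M[C]_2) : unitary U -> unitary (adjmx U).
Proof. by move=> hU; rewrite /unitary adjmxK; apply: unitaryC. Qed.

Lemma unitary_mul (C : numClosedFieldType) (U V : 'M[C]_2) :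
  unitary U -> unitary V -> unitary (U *m V).
Proof.
move=> hU hV; rewrite /unitary adjmxM mulmxA -(mulmxA U) hV mulmx1; exact: hU.
Qed.

Lemma unitary1 (C : numClosedFieldType) : unitary (1%:M : 'M[C]_2).
Proof. by rewrite /unitary adjmx1 mulmx1. Qed.

Lemma conjmE (C : numClosedFieldType) (P : 'M[C]_2) i j : conjm P i j = (P i j)^*.
Proof. by rewrite /conjm mxE. Qed.

Lemma conjm_mul (C : numClosedFieldType) (P Q : 'M[C]_2) : conjm (P *m Q) = conjm P *m conjm Q.
Proof. by apply: mx2P; rewrite !conjmE !mul2 !conjmE !rmorphD !rmorphM. Qed.

Lemma conjm_adj (C : numClosedFieldType) (P : 'M[C]_2) : conjm (adjmx P) = adjmx (conjm P).
Proof. by apply: mx2P; rewrite !conjmE !adjE !conjmE. Qed.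

Lemma unitary_conjm (C : numClosedFieldType) (U : 'M[C]_2) : unitary U -> unitary (conjm U).
Proof.
move=> hU; rewrite /unitary -conjm_adj -conjm_mul hU.
by apply: mx2P; rewrite !conjmE !mxE /= ?rmorph0 ?rmorph1.
Qed.

Lemma conjt_comp (C : numClosedFieldType) n (U V : 'M[C]_2) (Y : 'I_n -> 'M[C]_2) j :
  conjt U (conjt V Y) j = conjt (U *m V) Y j.
Proof. by rewrite /conjt adjmxM !mulmxA. Qed.

Lemma conjt_inv (C : numClosedFieldType) n (U : 'M[C]_2) (Y Y' : 'I_n -> 'M[C]_2) :
  unitary U -> (forall j, conjt U Y j = Y' j) -> forall j, conjt (adjmx U) Y' j = Y j.
Proof.
move=> hU h j; rewrite {1}/conjt -h /conjt adjmxK !mulmxA unitaryC // mul1mx.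
by rewrite -mulmxA unitaryC // mulmx1.
Qed.

Lemma trE (C : numClosedFieldType) (P : 'M[C]_2) i j : (P^T) i j = P j i.
Proof. by rewrite mxE. Qed.

Lemma tY_conjt (C : numClosedFieldType) n (U : 'M[C]_2) (Y : 'I_n -> 'M[C]_2) j :
  tY (conjt U Y) j = conjt (conjm U) (tY Y) j.
Proof.
rewrite /tY /conjt; apply: mx2P; rewrite !trE !mul2 !adjE !conjmE !trE !conjCK; ring.
Qed.

Lemma herm_entries (C : numClosedFieldType) (Y : 'M[C]_2) : Defs.hermitian Y ->
  [/\ Num.conj (Y 0 0) = Y 0 0, Num.conj (Y 1 1) = Y 1 1 & Y 1 0 = Num.conj (Y 0 1)].
Proof.
rewrite /Defs.hermitian => h.
have e00 := congr1 (fun M : 'M[C]_2 => M 0 0) h; have e11 := congr1 (fun M : 'M[C]_2 => M 1 1) h.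
have e10 := congr1 (fun M : 'M[C]_2 => M 1 0) h; rewrite /= !adjE in e00 e11 e10.
by split.
Qed.

Lemma hermP (C : numClosedFieldType) (Y : 'M[C]_2) :
  (Y 0 0)^* = Y 0 0 -> (Y 1 1)^* = Y 1 1 -> Y 1 0 = (Y 0 1)^* -> Defs.hermitian Y.
Proof. by move=> h0 h1 h2; apply: mx2P; rewrite !adjE // h2 conjCK. Qed.

Definition good {C : numClosedFieldType} {n} (b : 'cV[C]_n) (G : 'I_n -> 'I_n -> C)
  (Y : 'I_n -> 'M[C]_2) :=
  [/\ forall j, Defs.hermitian (Y j), forall j, \tr (Y j) = b j 0 &
      forall i j, \tr (Y i *m Y j) = G i j].

Lemma good_conj (C : numClosedFieldType) n b G (U : 'M[C]_2) (Y : 'I_n -> 'M[C]_2) :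
  unitary U -> good b G Y -> good b G (conjt U Y).
Proof.
move=> hU [hH hT hG]; split.
- move=> j; rewrite /Defs.hermitian /conjt !adjmxM adjmxK (hH j) mulmxA //.
- move=> j; rewrite /conjt mxtrace_mulC mulmxA unitaryC // mul1mx; exact: hT.
- move=> i j; rewrite /conjt.
  rewrite -!mulmxA (mulmxA (adjmx U)) unitaryC // mul1mx.
  rewrite mxtrace_mulC -!mulmxA unitaryC // mulmx1; exact: hG.
Qed.
Arguments herm_entries {C Y}.
Arguments unitaryC {C U}.
Arguments unitary_adj {C U}.
Arguments unitary_mul {C U V}.
Arguments unitary_conjm {C U}.
Arguments good_conj {C n b G U Y}.

Definition disc {C : numClosedFieldType} (Y : 'M[C]_2) : C :=
  (Y 0 0 - Y 1 1) * (Y 0 0 - Y 1 1)^* + 4%:R * (Y 0 1 * (Y 0 1)^*).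

Lemma mulCC_ge0 (C : numClosedFieldType) (x : C) : 0 <= x * x^*.
Proof. by rewrite -normCK exprn_ge0. Qed.

Lemma mulCC_eq0 (C : numClosedFieldType) (x : C) : (x * x^* == 0) = (x == 0).
Proof. by rewrite mulf_eq0 conjC_eq0 orbb. Qed.

Lemma disc_ge0 (C : numClosedFieldType) (Y : 'M[C]_2) : 0 <= disc Y.
Proof. by rewrite /disc; apply: addr_ge0; [apply: mulCC_ge0| apply: mulr_ge0; [apply: ler0n|apply: mulCC_ge0]]. Qed.

Lemma sum2_eq0 (C : numClosedFieldType) (x y : C) :
  x * x^* + 4%:R * (y * y^*) = 0 -> x = 0 /\ y = 0.
Proof.
move/eqP; rewrite paddr_eq0; last first.
- by apply: mulr_ge0; [apply: ler0n|apply: mulCC_ge0].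
- exact: mulCC_ge0.
case/andP=> /eqP h1 /eqP h2; split; apply/eqP.
- by rewrite -mulCC_eq0 h1.
- move: h2 => /eqP; rewrite mulf_eq0 pnatr_eq0 /= => /eqP h2.
  by rewrite -mulCC_eq0 h2.
Qed.

Lemma sqrtC_conj (C : numClosedFieldType) (x : C) : 0 <= x -> (sqrtC x)^* = sqrtC x.
Proof. by move=> hx; rewrite geC0_conj // sqrtC_ge0. Qed.

Lemma NF1 (C : numClosedFieldType) (Y : 'M[C]_2) : Defs.hermitian Y ->
  exists U, unitary U /\ (U *m Y *m adjmx U) 0 1 = 0 /\
    (U *m Y *m adjmx U) 0 0 - (U *m Y *m adjmx U) 1 1 = sqrtC (disc Y).
Proof.
move=> /herm_entries [h0 h1 h10].
set c := sqrtC (disc Y).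
have hc : c^* = c by apply: sqrtC_conj; apply: disc_ge0.
have hcc : c * c = (Y 0 0 - Y 1 1) * (Y 0 0 - Y 1 1) + 4%:R * (Y 0 1 * (Y 0 1)^*).
  by rewrite -expr2 sqrtCK /disc rmorphB /= h0 h1.
have hs0 : 0 <= (c + (Y 0 0 - Y 1 1)) * (c + (Y 0 0 - Y 1 1))^* + 4%:R * (Y 0 1 * (Y 0 1)^*).
  by apply: addr_ge0; [apply: mulCC_ge0| apply: mulr_ge0; [apply: ler0n|apply: mulCC_ge0]].
have hac : (c + (Y 0 0 - Y 1 1))^* = c + (Y 0 0 - Y 1 1) by rewrite rmorphD rmorphB /= hc h0 h1.
have [s0|sn0] := eqVneq ((c + (Y 0 0 - Y 1 1)) * (c + (Y 0 0 - Y 1 1))^* + 4%:R * (Y 0 1 * (Y 0 1)^*)) 0.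
  have [ha hq] := @sum2_eq0 C _ _ s0.
  exists (mk2 0 1 1 0); split; [|split].
  - by apply: mx2P; rewrite !mul2 !adjE !mkE !mxE /= ?rmorph0 ?rmorph1 /=; ring.
  - by rewrite !mul2 !adjE !mkE ?rmorph0 ?rmorph1 /= h10 hq rmorph0; ring.
  - rewrite !mul2 !adjE !mkE ?rmorph0 ?rmorph1 /=.
    by apply: (@lc1 C (-1) 1 _ _ _ _ (oner_neq0 _) _ ha); ring.
set s := _ + _ in hs0 sn0.
set l := (sqrtC s)^-1.
have hl : l^* = l by rewrite /l fmorphV /= sqrtC_conj.
have hls : l * l * s = 1.
  by rewrite -expr2 /l exprVn sqrtCK mulVf.
exists (l *: mk2 (c + (Y 0 0 - Y 1 1)) (2%:R * Y 0 1) (- (2%:R * (Y 0 1)^*)) (c + (Y 0 0 - Y 1 1))).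
split; [|split].
- apply: mx2P; rewrite !mul2 !adjE !mxE ?mkE /= !rmorphM ?rmorphN ?rmorphM /= ?rmorph_nat /= ?hl ?hac ?conjCK.
  + by apply: (@lc1 C 1 1 _ _ _ _ (oner_neq0 _) _ hls); rewrite /s hac; ring.
  + ring.
  + ring.
  + by apply: (@lc1 C 1 1 _ _ _ _ (oner_neq0 _) _ hls); rewrite /s hac; ring.
- rewrite !mul2 !adjE !mxE ?mkE /= !rmorphM ?rmorphN ?rmorphM /= ?rmorph_nat /= ?hl ?hac ?conjCK h10.
  by apply: (@lc1 C (l * l * Y 0 1) 1 _ _ _ _ (oner_neq0 _) _ hcc); ring.
- rewrite !mul2 !adjE !mxE ?mkE /= !rmorphM ?rmorphN ?rmorphM /= ?rmorph_nat /= ?hl ?hac ?conjCK h10.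
  apply: (@lc2 C c (- (l * l * (c + (Y 0 0 - Y 1 1)))) 1 _ _ _ _ _ _ (oner_neq0 _) _ hls hcc).
  rewrite /s hac; ring.
Qed.

Lemma NF2 (C : numClosedFieldType) (q : C) : q != 0 ->
  exists D : 'M[C]_2, unitary D /\ D 0 0 * q = `|q| /\
   forall Y : 'M[C]_2, [/\ (D *m Y *m adjmx D) 0 0 = Y 0 0, (D *m Y *m adjmx D) 1 1 = Y 1 1
      & (D *m Y *m adjmx D) 0 1 = D 0 0 * Y 0 1].
Proof.
move=> hq.
have hn : `|q|^* = `|q| by rewrite geC0_conj.
have huu : (`|q| / q) * (`|q| / q)^* = 1.
  rewrite rmorphM fmorphV /= hn mulrACA -expr2 normCK -invfM mulfV //.
  by rewrite mulf_neq0 // conjC_eq0.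
exists (mk2 (`|q| / q) 0 0 1); split; [|split].
- apply: mx2P; rewrite !mul2 !adjE !mkE ?rmorph0 ?rmorph1 /= !mxE /=; try ring.
  by rewrite huu; ring.
- by rewrite mk00 mulfVK.
- move=> Y; split; rewrite !mul2 !adjE !mkE ?rmorph0 ?rmorph1 /=.
  + transitivity ((`|q| / q * (`|q| / q)^*) * Y 0 0); last by rewrite huu mul1r.
    by rewrite !mul0r !mulr0 !addr0 mulrAC.
  + by rewrite !mul0r !mulr0 !add0r !mul1r mulr1.
  + by rewrite !mul0r !mulr0 !addr0 !add0r !mulr1.
Qed.

Lemma diag_unit_fix (C : numClosedFieldType) (D Y : 'M[C]_2) :
  D 0 1 = 0 -> D 1 0 = 0 -> Y 0 1 = 0 -> Y 1 0 = 0 -> (D *m Y *m adjmx D) 0 1 = 0.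
Proof. by move=> h1 h2 h3 h4; rewrite !mul2 !adjE h1 h2 h3 h4 ?rmorph0; ring. Qed.

Lemma herm_eq (C : numClosedFieldType) (P Q : 'M[C]_2) : Defs.hermitian P -> Defs.hermitian Q ->
  P 0 0 = Q 0 0 -> P 1 1 = Q 1 1 -> P 0 1 = Q 0 1 -> P = Q.
Proof.
move=> /herm_entries [_ _ hp] /herm_entries [_ _ hq] e0 e1 e2.
by apply: mx2P; [exact: e0|exact: e2|rewrite hp hq e2|exact: e1].
Qed.

Lemma herm_eqT (C : numClosedFieldType) (P Q : 'M[C]_2) : Defs.hermitian P -> Defs.hermitian Q ->
  P 0 0 = Q 0 0 -> P 1 1 = Q 1 1 -> P 0 1 = (Q 0 1)^* -> P = Q^T.
Proof.
move=> /herm_entries [_ _ hp] /herm_entries [_ _ hq] e0 e1 e2.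
by apply: mx2P; rewrite !trE; [exact: e0|rewrite e2 hq|rewrite hp e2 conjCK|exact: e1].
Qed.

Lemma cmp_diag (C : numClosedFieldType) n b G (Y Y' : 'I_n -> 'M[C]_2) j1 :
  good b G Y -> good b G Y' -> Y j1 = Y' j1 -> Y j1 0 1 = 0 -> Y j1 0 0 != Y j1 1 1 ->
  forall j, [/\ Y j 0 0 = Y' j 0 0, Y j 1 1 = Y' j 1 1 &
     Y j 0 1 * (Y j 0 1)^* = Y' j 0 1 * (Y' j 0 1)^*].
Proof.
move=> [hH hT hG] [hH' hT' hG'] e1 h01 hne j.
have [_ _ h10] := herm_entries (hH j1).
have [_ _ hj] := herm_entries (hH j).
have [_ _ hj'] := herm_entries (hH' j).
have eT : Y j 0 0 + Y j 1 1 = Y' j 0 0 + Y' j 1 1 by rewrite -!tr2 hT hT'.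
have eA : \tr (Y j *m Y j1) = \tr (Y' j *m Y' j1) by rewrite hG hG'.
rewrite !tr2 !mul2 -e1 h10 h01 rmorph0 in eA.
have e00 : Y j 0 0 = Y' j 0 0.
  have hk : Y j1 0 0 - Y j1 1 1 != 0 by rewrite subr_eq0.
  apply: (@lc2 C 1 (- Y j1 1 1) _ _ _ _ _ _ _ hk _ eA eT); ring.
have e11 : Y j 1 1 = Y' j 1 1.
  by move: eT; rewrite e00 => /addrI.
split=> //.
have eS : \tr (Y j *m Y j) = \tr (Y' j *m Y' j) by rewrite hG hG'.
rewrite !tr2 !mul2 hj hj' e00 e11 in eS.
have two : (2 : C) != 0 by rewrite pnatr_eq0.
by apply: (@lc1 C 1 2 _ _ _ _ two _ eS); ring.
Qed.

Arguments cmp_diag {C n b G Y Y' j1}.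

Lemma cmp_re (C : numClosedFieldType) n b G (Y Y' : 'I_n -> 'M[C]_2) j1 j2 (r : C) :
  good b G Y -> good b G Y' -> Y j1 = Y' j1 -> Y j1 0 1 = 0 -> Y j1 0 0 != Y j1 1 1 ->
  Y j2 = Y' j2 -> Y j2 0 1 = r -> r^* = r -> r != 0 ->
  forall j, Y j 0 1 + (Y j 0 1)^* = Y' j 0 1 + (Y' j 0 1)^*.
Proof.
move=> gY gY' e1 h01 hne e2 h2 hr rn0 j.
have [hH hT hG] := gY; have [hH' hT' hG'] := gY'.
have [e00 e11 _] := cmp_diag gY gY' e1 h01 hne j.
have [_ _ h10] := herm_entries (hH j2).
have [_ _ hj] := herm_entries (hH j).
have [_ _ hj'] := herm_entries (hH' j).
have eA : \tr (Y j *m Y j2) = \tr (Y' j *m Y' j2) by rewrite hG hG'.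
rewrite !tr2 !mul2 -e2 h10 h2 hr hj hj' e00 e11 in eA.
by apply: (@lc1 C 1 r _ _ _ _ rn0 _ eA); ring.
Qed.

Lemma cmp_cross (C : numClosedFieldType) n b G (Y Y' : 'I_n -> 'M[C]_2) j1 :
  good b G Y -> good b G Y' -> Y j1 = Y' j1 -> Y j1 0 1 = 0 -> Y j1 0 0 != Y j1 1 1 ->
  forall j k, Y j 0 1 * (Y k 0 1)^* + (Y j 0 1)^* * Y k 0 1 =
              Y' j 0 1 * (Y' k 0 1)^* + (Y' j 0 1)^* * Y' k 0 1.
Proof.
move=> gY gY' e1 h01 hne j k.
have [hH hT hG] := gY; have [hH' hT' hG'] := gY'.
have [e00 e11 _] := cmp_diag gY gY' e1 h01 hne j.
have [f00 f11 _] := cmp_diag gY gY' e1 h01 hne k.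
have [_ _ hj] := herm_entries (hH j).
have [_ _ hj'] := herm_entries (hH' j).
have [_ _ hk] := herm_entries (hH k).
have [_ _ hk'] := herm_entries (hH' k).
have eA : \tr (Y j *m Y k) = \tr (Y' j *m Y' k) by rewrite hG hG'.
rewrite !tr2 !mul2 hj hj' hk hk' e00 e11 f00 f11 in eA.
by apply: (@lc1 C 1 1 _ _ _ _ (oner_neq0 _) _ eA); ring.
Qed.

Lemma two_roots (C : numClosedFieldType) (x y : C) :
  x + x^* = y + y^* -> x * x^* = y * y^* -> y = x \/ y = x^*.
Proof.
move=> h1 h2.
have : (y - x) * (y - x^*) = 0.
  apply: (@lc2 C (-y) 1 1 _ _ _ _ _ _ (oner_neq0 _) _ h1 h2); ring.
move/eqP; rewrite mulf_eq0 !subr_eq0 => /orP[/eqP ->|/eqP ->]; by [left|right].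
Qed.

Lemma cross_same (C : numClosedFieldType) (x y y' : C) :
  x^* != x -> x * y^* + x^* * y = x * y'^* + x^* * y' -> (y' = y \/ y' = y^*) -> y' = y.
Proof.
move=> hx hc [//|hy]; rewrite hy in hc *.
have : (x - x^*) * (y^* - y) = 0.
  apply: (@lc1 C 1 1 _ _ _ _ (oner_neq0 _) _ hc); rewrite conjCK; ring.
move/eqP; rewrite mulf_eq0 subr_eq0 eq_sym (negbTE hx) /= subr_eq0 => /eqP //.
Qed.

Lemma cross_conj (C : numClosedFieldType) (x y y' : C) :
  x^* != x -> x * y^* + x^* * y = x^* * y'^* + x^*^* * y' -> (y' = y \/ y' = y^*) -> y' = y^*.
Proof.
move=> hx hc [hy|//]; rewrite hy in hc *.
have : (x - x^*) * (y^* - y) = 0.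
  apply: (@lc1 C 1 1 _ _ _ _ (oner_neq0 _) _ hc); rewrite conjCK; ring.
move/eqP; rewrite mulf_eq0 subr_eq0 eq_sym (negbTE hx) /= subr_eq0 => /eqP //.
Qed.

Definition gmat {C : numClosedFieldType} {n} (b : 'cV[C]_n) (G : 'I_n -> 'I_n -> C) : 'M[C]_n :=
  \matrix_(i, j) (G i j - b i 0 * b j 0 / 2%:R).

Lemma gmat_formula (C : numClosedFieldType) n b G (Y : 'I_n -> 'M[C]_2) :
  good b G Y -> forall i j, gmat b G i j =
   (Y i 0 0 - Y i 1 1) * (Y j 0 0 - Y j 1 1) / 2%:R
   + (Y i 0 1 * (Y j 0 1)^* + (Y i 0 1)^* * Y j 0 1).
Proof.
move=> [hH hT hG] i j; rewrite mxE -hG -!hT !tr2 !mul2.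
have [_ _ hi] := herm_entries (hH i); have [_ _ hj] := herm_entries (hH j).
rewrite hi hj.
have two : (2%:R : C) != 0 by rewrite pnatr_eq0.
by field.
Qed.

Arguments gmat_formula {C n b G Y}.

Lemma rank_le2 (C : numClosedFieldType) n b G (Y : 'I_n -> 'M[C]_2) :
  good b G Y -> (forall j, (Y j 0 1)^* = Y j 0 1) -> (\rank (gmat b G) <= 2)%N.
Proof.
move=> gY hr.
pose L : 'M[C]_(n, 2) := \matrix_(i, k) (if k == 0 then Y i 0 0 - Y i 1 1 else Y i 0 1).
pose L' : 'M[C]_(n, 2) := \matrix_(i, k) (if k == 0 then (Y i 0 0 - Y i 1 1) / 2%:R else 2%:R * Y i 0 1).
have -> : gmat b G = L *m L'^T.
  apply/matrixP=> i j; rewrite (gmat_formula gY) mxE !big_ord_recl big_ord0 !mxE /=.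
  rewrite !hr.

  ring.
apply: leq_trans (mxrankM_maxl _ _) _; exact: rank_leq_col.
Qed.

Lemma ord3P (a : 'I_3) : [\/ a = 0, a = 1 | a = 2].
Proof.
case: a => [[|[|[|m]]]] H; [apply: Or31|apply: Or32|apply: Or33|by []]; exact: val_inj.
Qed.

Lemma rank_ge3 (C : numClosedFieldType) n b G (Y : 'I_n -> 'M[C]_2) j1 j2 j3 (r : C) :
  good b G Y -> Y j1 0 1 = 0 -> Y j1 0 0 != Y j1 1 1 -> Y j2 0 1 = r -> r^* = r -> r != 0 ->
  (Y j3 0 1)^* != Y j3 0 1 -> (3 <= \rank (gmat b G))%N.
Proof.
move=> gY h1 hne h2 hr rn0 h3.
pose f (a : 'I_3) : 'I_n := if a == 0 then j1 else if a == 1 then j2 else j3.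
pose Lf : 'M[C]_(n, 3) := \matrix_(i, k) (if k == 0 then Y i 0 0 - Y i 1 1
   else if k == 1 then Y i 0 1 + (Y i 0 1)^* else Y i 0 1 - (Y i 0 1)^*).
pose d : 'rV[C]_3 := \row_k (if k == 2 then - 2%:R^-1 else 2%:R^-1).
have two : (2%:R : C) != 0 by rewrite pnatr_eq0.
have e1 : gmat b G = Lf *m diag_mx d *m Lf^T.
  apply/matrixP=> i j; rewrite (gmat_formula gY) mxE !big_ord_recl big_ord0.
  rewrite !mul_mx_diag !mxE /=.
  by field.
pose L3 : 'M[C]_3 := \matrix_(a, k) Lf (f a) k.
pose P : 'M[C]_(3, n) := \matrix_(a, k) ((k == f a)%:R).
have e2 : P *m Lf = L3.
  apply/matrixP=> a k; rewrite !mxE (bigD1 (f a)) //= !mxE eqxx mul1r big1 ?addr0 //.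
  by move=> i /negbTE hi; rewrite !mxE hi mul0r.
have eS : P *m gmat b G *m P^T = L3 *m diag_mx d *m L3^T.
  by rewrite e1 -e2 !mulmxA trmx_mul -!mulmxA.
have hle : (\rank (P *m gmat b G *m P^T) <= \rank (gmat b G))%N.
  apply: leq_trans (mxrankM_maxl _ _) _; exact: mxrankM_maxr.
apply: leq_trans hle; rewrite eS mxrank_unit //.
have hL3 : L3 \in unitmx.
  rewrite unitmxE unitfE det_trig; last first.
    apply/is_trig_mxP=> a k; rewrite !mxE /f.
    case: (ord3P a) => ->; case: (ord3P k) => -> //= _.
    - by rewrite h1 rmorph0 addr0.
    - by rewrite h1 rmorph0 subr0.
    - by rewrite h2 hr subrr.
  rewrite !big_ord_recl big_ord0 mulr1 !mxE /f /=.
  rewrite h2 hr !mulf_neq0 //.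
  - by rewrite subr_eq0.
  - by rewrite -mulr2n mulrn_eq0 negb_or rn0.
  - by rewrite subr_eq0 eq_sym.
have hd : diag_mx d \in unitmx.
  rewrite unitmxE unitfE det_diag !big_ord_recl big_ord0 mulr1 !mxE /=.
  by rewrite /= !mulf_neq0 ?oppr_eq0 ?invr_eq0.
by rewrite !unitmx_mul unitmx_tr hL3 hd.
Qed.

Definition ttr {C : numClosedFieldType} (P Q R : 'M[C]_2) :=
  \tr (P *m Q *m R) - \tr (R *m Q *m P).

Lemma ttr_conj (C : numClosedFieldType) (U P Q R : 'M[C]_2) : unitary U ->
  ttr (U *m P *m adjmx U) (U *m Q *m adjmx U) (U *m R *m adjmx U) = ttr P Q R.
Proof.
move=> hU; have hC := unitaryC hU.
have e X Y Z : \tr ((U *m X *m adjmx U) *m (U *m Y *m adjmx U) *m (U *m Z *m adjmx U))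
   = \tr (X *m Y *m Z).
  rewrite -!mulmxA (mulmxA (adjmx U) U) hC mul1mx (mulmxA (adjmx U) U) hC mul1mx.
  by rewrite mxtrace_mulC -!mulmxA hC mulmx1 !mulmxA.
by rewrite /ttr !e.
Qed.

Lemma ttr_tr (C : numClosedFieldType) (P Q R : 'M[C]_2) :
  ttr P^T Q^T R^T = - ttr P Q R.
Proof.
have e X Y Z : \tr (X^T *m Y^T *m Z^T) = \tr (Z *m Y *m X) :> C.
  by rewrite -trmx_mul -trmx_mul mxtrace_tr mulmxA.
by rewrite /ttr !e opprB.
Qed.

Lemma ttr_val (C : numClosedFieldType) (P Q R : 'M[C]_2) (r : C) :
  P 0 1 = 0 -> P 1 0 = 0 -> Q 0 1 = r -> Q 1 0 = r -> R 1 0 = (R 0 1)^* ->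
  ttr P Q R = (P 0 0 - P 1 1) * r * ((R 0 1)^* - R 0 1).
Proof.
move=> h1 h2 h3 h4 h5; rewrite /ttr !tr2 !mul2 h1 h2 h3 h4 h5; ring.
Qed.

Lemma disc_G (C : numClosedFieldType) n b G (Y : 'I_n -> 'M[C]_2) j :
  good b G Y -> disc (Y j) = 2%:R * G j j - b j 0 ^+ 2.
Proof.
move=> [hH hT hG]; rewrite -hG -hT !tr2 !mul2 /disc.
have [h0 h1 h10] := herm_entries (hH j).
rewrite rmorphB /= h0 h1 h10; ring.
Qed.

Lemma conjt_ext (C : numClosedFieldType) n (U : 'M[C]_2) (Y Z : 'I_n -> 'M[C]_2) j :
  Y j = Z j -> conjt U Y j = conjt U Z j.
Proof. by rewrite /conjt => ->. Qed.

Lemma fin_left (C : numClosedFieldType) n (V V' : 'M[C]_2) (Y Y' : 'I_n -> 'M[C]_2) :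
  unitary V -> unitary V' -> (forall j, conjt V Y j = conjt V' Y' j) ->
  exists U, unitary U /\ forall j, conjt U Y j = Y' j.
Proof.
move=> hV hV' h; exists (adjmx V' *m V); split.
  by apply: unitary_mul => //; apply: unitary_adj.
move=> j; rewrite -conjt_comp.
rewrite (@conjt_ext _ _ _ _ (conjt V' Y') _ (h j)).
by apply: (@conjt_inv _ _ V' Y' (conjt V' Y')).
Qed.

Lemma fin_right (C : numClosedFieldType) n (V V' : 'M[C]_2) (Y Y' : 'I_n -> 'M[C]_2) :
  unitary V -> unitary V' -> (forall j, tY (conjt V Y) j = conjt V' Y' j) ->
  exists U, unitary U /\ forall j, conjt U (tY Y) j = Y' j.
Proof.
move=> hV hV' h; apply: (@fin_left _ _ (conjm V) V') => //.
  exact: unitary_conjm.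
by move=> j; rewrite -tY_conjt.
Qed.

Arguments disc_G {C n b G Y}.
Arguments NF1 {C Y}.
Arguments NF2 {C q}.
Arguments herm_eq {C P Q}.
Arguments herm_eqT {C P Q}.
Arguments cmp_re {C n b G Y Y' j1 j2 r}.
Arguments cmp_cross {C n b G Y Y' j1}.
Arguments rank_le2 {C n b G Y}.
Arguments rank_ge3 {C n b G Y j1 j2 j3 r}.

Lemma disc0 (C : numClosedFieldType) (P : 'M[C]_2) : Defs.hermitian P -> disc P = 0 ->
  P 0 1 = 0 /\ P 0 0 = P 1 1.
Proof.
move=> hP /(@sum2_eq0 C) [h1 h2]; split=> //; apply/eqP; rewrite -subr_eq0; exact/eqP.
Qed.

Lemma step1 (C : numClosedFieldType) n b G (Y Y' : 'I_n -> 'M[C]_2) j1 :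
  good b G Y -> good b G Y' -> disc (Y j1) != 0 ->
  exists U U', [/\ unitary U, unitary U', conjt U Y j1 = conjt U' Y' j1,
    conjt U Y j1 0 1 = 0 & conjt U Y j1 0 0 != conjt U Y j1 1 1].
Proof.
move=> gY gY' hd.
have [hH hT hG] := gY; have [hH' hT' hG'] := gY'.
have ed : disc (Y' j1) = disc (Y j1) by rewrite (disc_G j1 gY) (disc_G j1 gY').
have [U [hU [h01 hdf]]] := NF1 (hH j1).
have [U' [hU' [h01' hdf']]] := NF1 (hH' j1).
have [zH zT zG] := good_conj hU gY; have [zH' zT' zG'] := good_conj hU' gY'.
have t1 := zT j1; have t1' := zT' j1; rewrite tr2 /conjt in t1; rewrite tr2 /conjt in t1'.
rewrite ed in hdf'.
have hne : (U *m Y j1 *m adjmx U) 0 0 != (U *m Y j1 *m adjmx U) 1 1.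
  by rewrite -subr_eq0 hdf sqrtC_eq0.
have two : (2%:R : C) != 0 by rewrite pnatr_eq0.
exists U, U'; split=> //; rewrite /conjt.
apply: herm_eq; [exact: (zH j1) | exact: (zH' j1) | | | by rewrite h01 h01'].
- rewrite -t1' in t1; apply: (@lc2 C 1 1 2 _ _ _ _ _ _ two _ t1 (etrans hdf (esym hdf'))); ring.
- rewrite -t1' in t1; apply: (@lc2 C 1 (-1) 2 _ _ _ _ _ _ two _ t1 (etrans hdf (esym hdf'))); ring.
Qed.

Arguments step1 {C n b G Y Y' j1}.
Arguments fin_left {C n V V' Y Y'}.
Arguments fin_right {C n V V' Y Y'}.
Arguments disc0 {C P}.
Arguments two_roots {C x y}.
Arguments cross_same {C x y y'}.
Arguments cross_conj {C x y y'}.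

Lemma main_cmp (C : numClosedFieldType) n b G (Y Y' : 'I_n -> 'M[C]_2) :
  good b G Y -> good b G Y' ->
  (exists U, unitary U /\ forall j, conjt U Y j = Y' j) \/
  ((3 <= \rank (gmat b G))%N /\ exists U, unitary U /\ forall j, conjt U (tY Y) j = Y' j).
Proof.
move=> gY gY'.
have [hH hT hG] := gY; have [hH' hT' hG'] := gY'.
have two : (2%:R : C) != 0 by rewrite pnatr_eq0.
case: (boolP [forall j, disc (Y j) == 0]) => [/forallP hz | /forallPn [j1 hj1]].
  left; apply: (@fin_left _ _ 1%:M 1%:M); try exact: unitary1.
  move=> j; rewrite /conjt adjmx1 !mul1mx !mulmx1.
  have hz' : disc (Y' j) = 0 by rewrite (disc_G j gY') -(disc_G j gY); apply/eqP.
  have [a1 a2] := disc0 (hH j) (eqP (hz j)).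
  have [b1 b2] := disc0 (hH' j) hz'.
  have t := hT j; have t' := hT' j; rewrite tr2 in t; rewrite tr2 in t'; rewrite -t' in t.
  apply: herm_eq; [exact: hH | exact: hH' | | | by rewrite a1 b1].
  + by apply: (@lc3 C 1 1 (-1) 2 _ _ _ _ _ _ _ _ two _ t a2 b2); ring.
  + by apply: (@lc3 C 1 (-1) 1 2 _ _ _ _ _ _ _ _ two _ t a2 b2); ring.
have [U [U' [hU hU' e1 h01 hne]]] := step1 gY gY' hj1.
have gZ := good_conj hU gY; have gZ' := good_conj hU' gY'.
have [zH zT zG] := gZ; have [zH' zT' zG'] := gZ'.
have cd := cmp_diag gZ gZ' e1 h01 hne.
case: (boolP [forall j, conjt U Y j 0 1 == 0]) => [/forallP hz | /forallPn [j2 hj2]].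
  left; apply: (fin_left hU hU') => j.
  have [d0 d1 dq] := cd j.
  have hz' : conjt U' Y' j 0 1 = 0.
    by apply/eqP; rewrite -mulCC_eq0 -dq (eqP (hz j)) mul0r.
  apply: herm_eq; [exact: zH | exact: zH' | exact: d0 | exact: d1 | by rewrite (eqP (hz j)) hz'].
have q2 : conjt U Y j2 0 1 != 0 := hj2.
have [_ _ dq2] := cd j2.
have q2' : conjt U' Y' j2 0 1 != 0 by rewrite -mulCC_eq0 -dq2 mulCC_eq0.
have [D [hD [hDq hDY]]] := NF2 q2.
have [D' [hD' [hDq' hDY']]] := NF2 q2'.
have hW j : [/\ conjt D (conjt U Y) j 0 0 = conjt U Y j 0 0,
   conjt D (conjt U Y) j 1 1 = conjt U Y j 1 1 &
   conjt D (conjt U Y) j 0 1 = D 0 0 * conjt U Y j 0 1] := hDY _.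
have hW' j : [/\ conjt D' (conjt U' Y') j 0 0 = conjt U' Y' j 0 0,
   conjt D' (conjt U' Y') j 1 1 = conjt U' Y' j 1 1 &
   conjt D' (conjt U' Y') j 0 1 = D' 0 0 * conjt U' Y' j 0 1] := hDY' _.
have gW := good_conj hD gZ; have gW' := good_conj hD' gZ'.
have [wH wT wG] := gW; have [wH' wT' wG'] := gW'.
have [x0 x1 x2] := hW j1; have [y0 y1 y2] := hW' j1.
have ew1 : conjt D (conjt U Y) j1 = conjt D' (conjt U' Y') j1.
  apply: herm_eq; [exact: wH | exact: wH' | by rewrite x0 y0 e1 | by rewrite x1 y1 e1 |].
  by rewrite x2 y2 h01 -e1 h01 !mulr0.
have w01 : conjt D (conjt U Y) j1 0 1 = 0 by rewrite x2 h01 mulr0.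
have wne : conjt D (conjt U Y) j1 0 0 != conjt D (conjt U Y) j1 1 1 by rewrite x0 x1.
have nq : `|conjt U Y j2 0 1| = `|conjt U' Y' j2 0 1| by rewrite !normC_def dq2.
have [u0 u1 u2] := hW j2; have [v0 v1 v2] := hW' j2.
have [c0 c1 _] := cd j2.
have ew2 : conjt D (conjt U Y) j2 = conjt D' (conjt U' Y') j2.
  apply: herm_eq; [exact: wH | exact: wH' | by rewrite u0 v0 c0 | by rewrite u1 v1 c1 |].
  by rewrite u2 v2 hDq hDq' nq.
have w2 : conjt D (conjt U Y) j2 0 1 = `|conjt U Y j2 0 1| by rewrite u2 hDq.
have hr : `|conjt U Y j2 0 1|^* = `|conjt U Y j2 0 1| by rewrite geC0_conj.
have rn0 : `|conjt U Y j2 0 1| != 0 by rewrite normr_eq0.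
have cre := cmp_re gW gW' ew1 w01 wne ew2 w2 hr rn0.
have cdw := cmp_diag gW gW' ew1 w01 wne.
have ccr := cmp_cross gW gW' ew1 w01 wne.
have trs j : conjt D' (conjt U' Y') j 0 1 = conjt D (conjt U Y) j 0 1 \/
             conjt D' (conjt U' Y') j 0 1 = (conjt D (conjt U Y) j 0 1)^*.
  have [_ _ e] := cdw j; exact: (two_roots (cre j) e).
have hV : unitary (D *m U) by apply: unitary_mul.
have hV' : unitary (D' *m U') by apply: unitary_mul.
have fl : (forall j, conjt D' (conjt U' Y') j 0 1 = conjt D (conjt U Y) j 0 1) ->
    exists U0, unitary U0 /\ forall j, conjt U0 Y j = Y' j.
  move=> hall; apply: (fin_left hV hV') => j; rewrite -!conjt_comp.
  have [e0 e1' _] := cdw j.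
  by apply: herm_eq; [exact: wH | exact: wH' | exact: e0 | exact: e1' | rewrite hall].
case: (boolP [forall j, (conjt D (conjt U Y) j 0 1)^* == conjt D (conjt U Y) j 0 1])
   => [/forallP hre | /forallPn [j3 hj3]].
  left; apply: fl => j; case: (trs j) => -> //; exact/eqP.
have hj3' : (conjt D (conjt U Y) j3 0 1)^* != conjt D (conjt U Y) j3 0 1 := hj3.
have rk := rank_ge3 gW w01 wne w2 hr rn0 hj3'.
case: (trs j3) => h3.
  left; apply: fl => j.
  apply: (cross_same hj3') (trs j).
  by have := ccr j3 j; rewrite h3.
right; split=> //.
apply: (fin_right hV hV') => j; rewrite -!conjt_comp.
have [e0 e1' _] := cdw j.
have hc : conjt D' (conjt U' Y') j 0 1 = (conjt D (conjt U Y) j 0 1)^*.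
  apply: (cross_conj hj3') (trs j).
  by have := ccr j3 j; rewrite h3.
rewrite /tY -conjt_comp; symmetry; apply: herm_eqT; [exact: wH' | exact: wH | by rewrite e0 | by rewrite e1' | exact: hc].
Qed.

Arguments ttr_conj {C U}.
Arguments ttr_val {C P Q R r}.

Lemma nonequiv (C : numClosedFieldType) n b G (Y : 'I_n -> 'M[C]_2) :
  good b G Y -> (3 <= \rank (gmat b G))%N ->
  ~ exists U, unitary U /\ forall j, conjt U Y j = tY Y j.
Proof.
move=> gY rk [U [hU hUY]].
have [hH hT hG] := gY.
have two : (2%:R : C) != 0 by rewrite pnatr_eq0.
have hz j1 j2 j3 : ttr (Y j1) (Y j2) (Y j3) = 0.
  have := ttr_conj (Y j1) (Y j2) (Y j3) hU.
  have := hUY j1; have := hUY j2; have := hUY j3; rewrite /conjt /tY => -> -> ->.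
  rewrite ttr_tr => e.
  by apply: (@lc1 C 1 2 _ _ _ _ two _ (esym e)); ring.
have nle2 : ~ (\rank (gmat b G) <= 2)%N.
  by move=> h; have := leq_trans rk h.
case: (boolP [forall j, disc (Y j) == 0]) => [/forallP hz0 | /forallPn [j1 hj1]].
  apply: nle2; apply: (rank_le2 gY) => j.
  by have [-> _] := disc0 (hH j) (eqP (hz0 j)); rewrite rmorph0.
have [U1 [hU1 [h01 hdf]]] := NF1 (hH j1).
have gZ := good_conj hU1 gY; have [zH zT zG] := gZ.
have hne : conjt U1 Y j1 0 0 != conjt U1 Y j1 1 1.
  by rewrite -subr_eq0 /conjt hdf sqrtC_eq0.
case: (boolP [forall j, conjt U1 Y j 0 1 == 0]) => [/forallP hz1 | /forallPn [j2 hj2]].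
  apply: nle2; apply: (rank_le2 gZ) => j.
  by rewrite (eqP (hz1 j)) rmorph0.
have q2 : conjt U1 Y j2 0 1 != 0 := hj2.
have [D [hD [hDq hDY]]] := NF2 q2.
have hW j : [/\ conjt D (conjt U1 Y) j 0 0 = conjt U1 Y j 0 0,
   conjt D (conjt U1 Y) j 1 1 = conjt U1 Y j 1 1 &
   conjt D (conjt U1 Y) j 0 1 = D 0 0 * conjt U1 Y j 0 1] := hDY _.
have gW := good_conj hD gZ; have [wH wT wG] := gW.
case: (boolP [forall j, (conjt D (conjt U1 Y) j 0 1)^* == conjt D (conjt U1 Y) j 0 1])
   => [/forallP hre | /forallPn [j3 hj3]].
  apply: nle2; apply: (rank_le2 gW) => j; exact/eqP.
have [x0 x1 x2] := hW j1; have [u0 u1 u2] := hW j2.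
have w01 : conjt D (conjt U1 Y) j1 0 1 = 0 by rewrite x2 h01 mulr0.
have wne : conjt D (conjt U1 Y) j1 0 0 != conjt D (conjt U1 Y) j1 1 1 by rewrite x0 x1.
have w2 : conjt D (conjt U1 Y) j2 0 1 = `|conjt U1 Y j2 0 1| by rewrite u2 hDq.
have hr : `|conjt U1 Y j2 0 1|^* = `|conjt U1 Y j2 0 1| by rewrite geC0_conj.
have rn0 : `|conjt U1 Y j2 0 1| != 0 by rewrite normr_eq0.
have [_ _ a10] := herm_entries (wH j1).
have [_ _ b10] := herm_entries (wH j2).
have [_ _ c10] := herm_entries (wH j3).
have a10' : conjt D (conjt U1 Y) j1 1 0 = 0 by rewrite a10 w01 rmorph0.
have b10' : conjt D (conjt U1 Y) j2 1 0 = `|conjt U1 Y j2 0 1| by rewrite b10 w2 hr.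
have := ttr_val w01 a10' w2 b10' c10.
have -> : ttr (conjt D (conjt U1 Y) j1) (conjt D (conjt U1 Y) j2) (conjt D (conjt U1 Y) j3) = 0.
  by rewrite /conjt !(ttr_conj _ _ _ hD) !(ttr_conj _ _ _ hU1) hz.
move/esym/eqP; rewrite !mulf_eq0 !subr_eq0 (negbTE rn0) (negbTE hj3) (negbTE wne).
by [].
Qed.

Arguments main_cmp {C n b G Y Y'}.
Arguments nonequiv {C n b G Y}.
Arguments rep_facts {C n A b R}.

Lemma tyrep (C : numClosedFieldType) n (A : 'M[C]_n) b R : mhdr2 A b R -> mhdr2 A b (tY R).
Proof.
move=> [hH hd]; split.
  move=> j; have [h0 h1 h10] := herm_entries (hH j).
  by apply: mx2P; rewrite /tY !adjE !trE // h10 conjCK.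
move=> x hx; rewrite hd // -det_tr; congr (\det _).
apply/matrixP=> i k; rewrite !mxE !summxE eq_sym; congr (_ + _).
by apply: eq_bigr => j _; rewrite !mxE.
Qed.

Theorem mainTheorem5 (C : numClosedFieldType) (n : nat)
  (A : 'M[C]_n) (b : 'cV[C]_n)
  (hAr : real_mx A) (hbr : real_mx b) (hAsym : A^T = A)
  (hrep : exists R, mhdr2 A b R) :
  (\rank (A - 4%:R^-1 *: (b *m b^T)) = 3%N ->
     exists R1 R2, [/\ mhdr2 A b R1, mhdr2 A b R2, ~ unit_equiv R1 R2 &
       forall R, mhdr2 A b R -> unit_equiv R R1 \/ unit_equiv R R2])
  /\
  (leq (\rank (A - 4%:R^-1 *: (b *m b^T))) 2 ->
     forall R1 R2, mhdr2 A b R1 -> mhdr2 A b R2 -> unit_equiv R1 R2).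
Proof.
pose G := fun i j : 'I_n => b i 0 * b j 0 - 2 * A i j.
have goodR R : mhdr2 A b R -> good b G R.
  move=> hR; have [t g] := rep_facts hAsym hR; split=> //; exact: hR.1.
have two : (2%:R : C) != 0 by rewrite pnatr_eq0.
have rkQ : \rank (A - 4%:R^-1 *: (b *m b^T)) = \rank (gmat b G).
  have -> : gmat b G = (- 2%:R) *: (A - 4%:R^-1 *: (b *m b^T)).
    apply/matrixP=> i j; rewrite !mxE big_ord1 !mxE /G.
    have four : (4%:R : C) != 0 by rewrite pnatr_eq0.
    by field.
  by rewrite mxrank_scale_nz // oppr_eq0.
rewrite rkQ; split.
  move=> h3; have [R0 hR0] := hrep.
  exists R0, (tY R0); split.
  - exact: hR0.
  - exact: tyrep.
  - move=> [U [hU hE]]; apply: (nonequiv (goodR _ hR0)); first by rewrite h3.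
    by exists U; split.
  - move=> R hR; case: (main_cmp (goodR _ hR) (goodR _ hR0)) => [[U [hU hE]]|[_ [U [hU hE]]]].
      by left; exists U.
    right; exists (conjm U); split; first exact: unitary_conjm.
    move=> j; have := @tY_conjt C n U (tY R) j.
    have e2 : tY (conjt U (tY R)) j = (R0 j)^T by rewrite /tY hE.
    rewrite e2 /conjt /tY trmxK => e.
    by rewrite /tY e.
move=> h2 R1 R2 hR1 hR2.
case: (main_cmp (goodR _ hR1) (goodR _ hR2)) => [[U [hU hE]]|[h3 _]].
  by exists U.
by have := leq_trans h3 h2.
Qed.
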